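(* Let $H$ be a connected graph of order $m\ge 3$. (a) If $\textnormal{diam}(H)=1$, then $O_{\rm SR}(K_1\odot H)=\mathcal{B}$. (b) If $\textnormal{diam}(H)=2$, then $O_{\rm SR}(K_1\odot H)\in\{\mathcal{M},\mathcal{N},\mathcal{B}\}$. (c) If $\textnormal{diam}(H)=3$, then $O_{\rm SR}(K_1\odot H)\in\{\mathcal{N},\mathcal{B}\}$. (d) If $\textnormal{diam}(H)\ge 4$, then $O_{\rm SR}(K_1\odot H)=\mathcal{B}$.
   Context: All graphs are finite, simple and undirected; $\textnormal{diam}$ denotes diameter. $K_1\odot H$ (the corona product of $K_1$ with $H$) is the graph obtained from $H$ by adding one new vertex adjacent to every vertex of $H$. A set $S\subseteq V(X)$ is a strong resolving set of a connected graph $X$ if for all distinct $x,y\in V(X)$ there exists $z\in S$ such that $x$ lies on a $y$–$z$ geodesic or $y$ lies on an $x$–$z$ geodesic. The Maker–Breaker strong resolving game on $X$: Maker and Breaker alternately select a not-yet-chosen vertex of $X$; Maker wins if the vertices he selects contain a strong resolving set of $X$, Breaker wins otherwise. In the M-game Maker moves first, in the B-game Breaker moves first. $O_{\rm SR}(X)=\mathcal{M}$ if Maker has a winning strategy in both games, $\mathcal{B}$ if Breaker has a winning strategy in both, and $\mathcal{N}$ if the first player has a winning strategy in each. *)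

(* Defs.v *)
From mathcomp Require Import all_boot.
Set Implicit Arguments. Unset Strict Implicit. Unset Printing Implicit Defensive.

Section Graphs.
Variable V : finType.
Variable e : rel V.

Definition simple_graph := symmetric e /\ irreflexive e.

Fixpoint within (n : nat) (x y : V) : bool :=
  if n is n'.+1 then (x == y) || [exists z, e x z && within n' z y]
  else x == y.

Definition connected_graph := forall x y : V, exists n, within n x y.

(* graph distance (meaningful for connected graphs, where it is < #|V|) *)
Definition dist (x y : V) : nat :=
  \big[minn/#|V|]_(n < #|V| | within n x y) (n : nat).

Definition diam : nat := \max_(x : V) \max_(y : V) dist x y.

Definition on_geodesic (x y z : V) : bool := dist y x + dist x z == dist y z.

Definition strong_resolving (S : {set V}) : bool :=
  [forall x, forall y, (x != y) ==>
     [exists z in S, on_geodesic x y z || on_geodesic y x z]].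

(* The game ends when every vertex is chosen; Maker wins iff
   his set contains (equivalently, since the property is monotone, is) a strong
   resolving set.  win fuel M B t = Maker has a winning strategy from the state. *)
Fixpoint mb_win (fuel : nat) (M B : {set V}) (maker_turn : bool) : bool :=
  if fuel is f.+1 then
    let free := ~: (M :|: B) in
    if free == set0 then [exists S : {set V}, (S \subset M) && strong_resolving S]
    else if maker_turn then [exists v in free, mb_win f (v |: M) B false]
    else [forall v in free, mb_win f M (v |: B) true]
  else [exists S : {set V}, (S \subset M) && strong_resolving S].

Definition maker_wins_Mgame : bool := mb_win #|V|.+1 set0 set0 true.
Definition maker_wins_Bgame : bool := mb_win #|V|.+1 set0 set0 false.

End Graphs.

Inductive outcome := Out_M | Out_N | Out_B | Out_second.
(* Out_second: second player wins both games (not one of the paper's three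
   classes; listed so that O_SR is total). *)

Definition O_SR (V : finType) (e : rel V) : outcome :=
  match maker_wins_Mgame e, maker_wins_Bgame e with
  | true, true => Out_M
  | true, false => Out_N
  | false, false => Out_B
  | false, true => Out_second
  end.

Definition corona (T : finType) (e : rel T) : rel (option T) :=
  fun u v => match u, v with
  | Some x, Some y => e x y
  | None, Some _ | Some _, None => true
  | None, None => false
  end.

(* Main.v *)
Require Import Defs.
From mathcomp Require Import all_boot zify.

Section Gen.
Variable V : finType.
Variable e : rel V.

Lemma dist_le n x y : n < #|V| -> within e n x y -> dist e x y <= n.
Proof.
move=> hn hw; rewrite /dist.
have: Ordinal hn \in index_enum 'I_#|V| by rewrite mem_index_enum.
elim: (index_enum _) => // i r IH; rewrite in_cons big_cons.
case/orP => [/eqP <-|/IH h]; first by rewrite hw /= geq_minl.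
by case: ifP => // _; rewrite geq_min h orbT.
Qed.

Lemma dist_ge k x y : k <= #|V| -> (forall n, n < k -> ~~ within e n x y) ->
  k <= dist e x y.
Proof.
move=> hk hn; rewrite /dist; apply: (big_ind (fun m => k <= m)) => //.
  by move=> a b ha hb; rewrite leq_min ha hb.
move=> i hi; rewrite leqNgt; apply/negP => lt.
by move: (hn _ lt); rewrite hi.
Qed.

Lemma dist_pos x y : x != y -> 0 < dist e x y.
Proof.
move=> hxy; apply: dist_ge.
  by apply/card_gt0P; exists x.
by case=> //= _; rewrite (negbTE hxy).
Qed.

Definition free (M B : {set V}) := ~: (M :|: B).

Lemma free_addM {v M B} : v \in free M B -> #|free (v |: M) B| < #|free M B|.
Proof.
move=> hv; rewrite [#|free M B|](cardsD1 v) hv add1n ltnS.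
apply: subset_leq_card; apply/subsetP => w.
move: hv; rewrite !inE negb_or => /andP[hM hB].
by case: (eqVneq w v).
Qed.

Lemma free_addB {v M B} : v \in free M B -> #|free M (v |: B)| < #|free M B|.
Proof.
move=> hv; rewrite [#|free M B|](cardsD1 v) hv add1n ltnS.
apply: subset_leq_card; apply/subsetP => w.
move: hv; rewrite !inE negb_or => /andP[hM hB].
by case: (eqVneq w v) => //= _; rewrite orbT.
Qed.

Definition term (M : {set V}) := [exists S : {set V}, (S \subset M) && strong_resolving e S].

Lemma win_W f M B t : mb_win e f M B t ->
  exists2 S : {set V}, S \subset M :|: ~: B & strong_resolving e S.
Proof.
elim: f M B t => [|f IH] M B t /=.
  by case/existsP => S /andP[h1 h2]; exists S => //; apply: subset_trans h1 (subsetUl _ _).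
case: ifP => hfree.
  by case/existsP => S /andP[h1 h2]; exists S => //; apply: subset_trans h1 (subsetUl _ _).
case: t.
  case/existsP => v /andP[hv /IH [S hS hsr]]; exists S => //.
  apply: subset_trans hS _; apply/subsetP => w.
  move: hv; rewrite !inE negb_or => /andP[hM hB].
  by case/orP => [/orP[/eqP->|->]|->]; rewrite ?hB ?orbT.
case/set0Pn: (negbT hfree) => v hv.
move/forallP/(_ v)/implyP/(_ hv)/IH => [S hS hsr]; exists S => //.
apply: subset_trans hS _; apply/subsetP => w; rewrite !inE.
by case/orP => [->|]; rewrite ?negb_or ?orbT // => /andP[_ ->]; rewrite orbT.
Qed.

Lemma fuel_irr f g M B t : #|free M B| < f -> #|free M B| < g ->
  mb_win e f M B t = mb_win e g M B t.
Proof.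
elim: f g M B t => [|f IH] [|g] M B t //= hf hg.
case: ifP => // hfree; case: t.
  apply: eq_existsb => v; case hv: (v \in _) => //=.
  apply: IH; apply: leq_trans (free_addM hv) _; by rewrite -ltnS.
apply: eq_forallb => v; case hv: (v \in _) => //=.
apply: IH; apply: leq_trans (free_addB hv) _; by rewrite -ltnS.
Qed.

Lemma win_S f M B t : mb_win e f.+1 M B t =
  if free M B == set0 then term M
  else if t then [exists v in free M B, mb_win e f (v |: M) B false]
  else [forall v in free M B, mb_win e f M (v |: B) true].
Proof. by []. Qed.

Lemma win_0 M B t : mb_win e 0 M B t = term M.
Proof. by []. Qed.

Lemma term_of_win f (M M' B : {set V}) t : mb_win e f M B t -> free M' B == set0 ->
  M \subset M' -> term M'.
Proof.
move=> /win_W [S hS hsr] /eqP h0 hMM'; apply/existsP; exists S; rewrite hsr andbT.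
apply: subset_trans hS _; apply/subsetP => w; rewrite !inE.
case/orP => [/(subsetP hMM')//|hB].
have : w \notin free M' B by rewrite h0 inE.
by rewrite /free !inE negbK; case/orP => // hB'; rewrite hB' in hB.
Qed.

Lemma free_sub (M M' B : {set V}) : M \subset M' -> free M' B \subset free M B.
Proof.
move=> hMM'; apply/subsetP => w; rewrite !inE !negb_or => /andP[h1 ->].
by rewrite andbT; apply: contra h1; apply/subsetP.
Qed.

Lemma mono n (M M' B : {set V}) t : #|free M B| <= n -> M \subset M' ->
  mb_win e n.+1 M B t -> mb_win e n.+1 M' B t.
Proof.
elim: n M M' B t => [|n IH] M M' B t hc hMM' hw.
  have h0 : free M' B == set0.
    rewrite -subset0; apply: subset_trans (free_sub _ _ B hMM') _.
    by rewrite subset0 -cards_eq0 -leqn0.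
  by rewrite win_S h0; apply: term_of_win hw h0 hMM'.
case h0 : (free M' B == set0).
  by rewrite win_S h0; apply: term_of_win hw h0 hMM'.
have hsub := free_sub _ _ B hMM'.
have h0' : (free M B == set0) = false.
  by apply/negbTE; apply: contraFN h0; rewrite -!subset0; apply: subset_trans.
move: hw; rewrite !win_S h0 h0'; case: t.
  case/existsP => v /andP[hv hw].
  have hc' : #|free (v |: M) B| <= n by rewrite -ltnS; apply: leq_trans (free_addM hv) hc.
  case hv' : (v \in free M' B).
    by apply/existsP; exists v; rewrite hv' /=; apply: IH hc' _ hw; apply: setUS.
  case/set0Pn: (negbT h0) => w hw'.
  apply/existsP; exists w; rewrite hw' /=; apply: IH hc' _ hw.
  apply/subsetP => x; rewrite !inE; case/orP => [/eqP ->|/(subsetP hMM') ->]; last by rewrite orbT.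
  move: hv hv'; rewrite /free !inE !negb_or => /andP[_ hB]; rewrite hB andbT => /negbFE ->.
  by rewrite orbT.
move=> hw; apply/forallP => v; apply/implyP => hv.
have hvM := subsetP hsub _ hv.
move/forallP/(_ v)/implyP/(_ hvM): hw => hw.
apply: IH _ hMM' hw; rewrite -ltnS; apply: leq_trans (free_addB hvM) hc.
Qed.

Lemma steal : maker_wins_Bgame e -> maker_wins_Mgame e.
Proof.
rewrite /maker_wins_Bgame /maker_wins_Mgame => hB.
have hc : #|free set0 set0| <= #|V| by apply: max_card.
rewrite win_S; case: ifP => hfree.
  by apply: term_of_win hB hfree (subxx _).
case/set0Pn: (negbT hfree) => v hv; apply/existsP; exists v; rewrite hv /=.
have h := @mono #|V| set0 (v |: set0) set0 false hc (sub0set _) hB.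
have h1 := leq_trans (free_addM hv) hc.
rewrite (@fuel_irr #|V| #|V|.+1) //.
by apply: leq_trans h1 _.
Qed.
Definition forced x y := forall S, strong_resolving e S -> (x \in S) || (y \in S).

Lemma term_contra {M : {set V}} {x y} : term M -> x \notin M -> y \notin M -> forced x y -> False.
Proof.
case/existsP => S /andP[hS hsr] hx hy hf.
case/orP: (hf S hsr) => /(subsetP hS); by [rewrite (negbTE hx) | rewrite (negbTE hy)].
Qed.

Lemma W_contra {f} {M B : {set V}} {t x y} : mb_win e f M B t -> x \notin M -> y \notin M ->
  x \in B -> y \in B -> forced x y -> False.
Proof.
case/win_W => S hS hsr hx hy hxB hyB hf.
case/orP: (hf S hsr) => /(subsetP hS); rewrite !inE.
  by rewrite (negbTE hx) hxB.
by rewrite (negbTE hy) hyB.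
Qed.

Lemma breaker_wins f (M B : {set V}) v p q : v \notin M -> v \notin B -> p \notin M -> p \notin B ->
  q \notin M -> q \notin B -> p != q -> p != v -> q != v ->
  forced v p -> forced v q -> mb_win e f M B false -> False.
Proof.
move=> hvM hvB hpM hpB hqM hqB hpq hpv hqv hfp hfq.
case: f => [|f]; first by rewrite win_0 => /term_contra/(_ hvM hpM hfp).
have hvF : v \in free M B by rewrite !inE negb_or hvM hvB.
rewrite win_S; have -> : (free M B == set0) = false by apply/negbTE/set0Pn; exists v.
rewrite /= => /forallP/(_ v)/implyP/(_ hvF).
case: f => [|f]; first by rewrite win_0 => /term_contra/(_ hvM hpM hfp).
have hpF : p \in free M (v |: B) by rewrite !inE !negb_or hpM hpB hpv.
rewrite win_S; have -> : (free M (v |: B) == set0) = false by apply/negbTE/set0Pn; exists p.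
rewrite /= => /existsP [u /andP[hu hw]].
move: hu; rewrite !inE !negb_or => /andP[huM /andP[huv huB]].
have [r [hru hrM hrB hrv hfr]] : exists r, [/\ r != u, r \notin M, r \notin B, r != v & forced v r].
  case: (eqVneq u p) => [->|?]; [exists q | exists p]; split => //; by rewrite eq_sym.
have hvM' : v \notin u |: M by rewrite !inE negb_or eq_sym huv.
have hrM' : r \notin u |: M by rewrite !inE negb_or hru.
move: hw; case: f => [|f]; first by rewrite win_0 => /term_contra/(_ hvM' hrM' hfr).
have hrF : r \in free (u |: M) (v |: B).
  by move: hrM'; rewrite !inE !negb_or => ->; rewrite hrv hrB.
rewrite win_S; have -> : (free (u |: M) (v |: B) == set0) = false by apply/negbTE/set0Pn; exists r.
rewrite /= => /forallP/(_ r)/implyP/(_ hrF) hw.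
apply: (W_contra hw hvM' hrM' _ _ hfr); by rewrite !inE eqxx ?orbT.
Qed.

Lemma Bgame_loss v p q : p != q -> p != v -> q != v -> forced v p -> forced v q ->
  ~~ maker_wins_Bgame e.
Proof.
move=> *; apply/negP => hw.
by apply: (breaker_wins _ _ _ v p q _ _ _ _ _ _ _ _ _ _ _ hw); rewrite ?inE.
Qed.

Lemma Mgame_loss (x0 : V) : (forall x, exists v p q,
   [/\ v != x, p != x, q != x, p != q & (p != v) && (q != v)] /\ (forced v p /\ forced v q)) ->
  ~~ maker_wins_Mgame e.
Proof.
move=> h; apply/negP; rewrite /maker_wins_Mgame win_S; case: ifP => hfree.
  have [v [p [q [[_ _ _ _ /andP[hpv _]] [hfp _]]]]] := h x0.
  by move/term_contra => /(_ v p); rewrite !inE; apply.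
case/existsP => x /andP[_ hw].
have [v [p [q [[hvx hpx hqx hpq /andP[hpv hqv]] [hfp hfq]]]]] := h x.
apply: (breaker_wins _ _ _ v p q _ _ _ _ _ _ _ _ _ _ _ hw); by rewrite ?inE ?orbF.
Qed.
End Gen.
Arguments forced {V} e x y.
Arguments dist_pos {V e x y}.
Arguments dist_le {V e n x y}.
Arguments dist_ge {V e k x y}.
Arguments Bgame_loss {V e} v p q.
Arguments Mgame_loss {V e} x0.
Arguments steal {V e}.

Section Cor.
Variable T : finType.
Variable e : rel T.
Notation G := (corona e).

Lemma within2 a b : within G 2 a b.
Proof.
case: a => [x|]; case: b => [y|]; apply/orP; try by left.
- right; apply/existsP; exists None; apply/andP; split => //.
  by apply/orP; right; apply/existsP; exists (Some y); apply/andP; split.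
- by right; apply/existsP; exists None; apply/andP; split => //; apply/orP; left.
- by right; apply/existsP; exists (Some y); apply/andP; split => //; apply/orP; left.
Qed.

Hypothesis hT : 1 < #|T|.

Lemma cor_le2 a b : dist G a b <= 2.
Proof. by apply: dist_le; [rewrite card_option | apply: within2]. Qed.

Lemma cor_ge2 u w : u != w -> ~~ e u w -> 2 <= dist G (Some u) (Some w).
Proof.
move=> huw he; apply: dist_ge; first by rewrite card_option; apply: ltnW.
case=> [|[|n]] // _.
rewrite /= negb_or; apply/andP; split; first exact: huw.
by apply/existsP => -[z /andP[hz /eqP hz']]; move: hz; rewrite hz' /= (negbTE he).
Qed.

Lemma forced_nonadj u w : u != w -> ~~ e u w -> ~~ e w u -> forced G (Some u) (Some w).
Proof.
move=> huw he he' S /forallP/(_ (Some u))/forallP/(_ (Some w))/implyP/(_ huw).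
case/existsP => z /andP[zS]; rewrite /on_geodesic.
have hwu : w != u by rewrite eq_sym.
case/orP => /eqP h.
  case: (eqVneq (Some u) z) => [->|hz]; first by rewrite zS.
  have := cor_ge2 _ _ hwu he'; have := cor_le2 (Some w) z.
  have := dist_pos (e:=G) hz; lia.
case: (eqVneq (Some w) z) => [->|hz]; first by rewrite zS orbT.
have := cor_ge2 _ _ huw he; have := cor_le2 (Some u) z.
have := dist_pos (e:=G) hz; lia.
Qed.

Lemma forced_complete : (forall u w, u != w -> e u w) ->
  forall a b, a != b -> forced G a b.
Proof.
move=> hc.
have le1 : forall a b, dist G a b <= 1.
  move=> a b; apply: dist_le; first by rewrite card_option; apply: ltnW.
  case: a => [x|]; case: b => [y|]; apply/orP; try by left.
  - case: (eqVneq x y) => [->|hxy]; first by left.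
    by right; apply/existsP; exists (Some y); apply/andP; split => //=; apply: hc.
  - by right; apply/existsP; exists None; apply/andP; split.
  - by right; apply/existsP; exists (Some y); apply/andP; split.
move=> a b hab S /forallP/(_ a)/forallP/(_ b)/implyP/(_ hab).
case/existsP => z /andP[zS]; rewrite /on_geodesic.
have hba : b != a by rewrite eq_sym.
case/orP => /eqP h.
  case: (eqVneq a z) => [->|hz]; first by rewrite zS.
  have := dist_pos (e:=G) hba; have := le1 b z; have := dist_pos (e:=G) hz; lia.
case: (eqVneq b z) => [->|hz]; first by rewrite zS orbT.
have := dist_pos (e:=G) hab; have := le1 a z; have := dist_pos (e:=G) hz; lia.
Qed.
End Cor.

Section H.
Variable T : finType.
Variable e : rel T.
Hypothesis hsym : symmetric e.
Hypothesis hirr : irreflexive e.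
Hypothesis hconn : connected_graph e.

Lemma within1P x y : within e 1 x y = (x == y) || e x y.
Proof.
rewrite /=; congr (_ || _); apply/existsP/idP => [[z /andP[h /eqP <-]]//|h].
by exists y; rewrite h eqxx.
Qed.

Lemma within2_of x z y : e x z -> e z y -> within e 2 x y.
Proof.
move=> h1 h2; apply/orP; right; apply/existsP; exists z; rewrite h1.
by move: (within1P z y) => /= ->; rewrite h2 orbT.
Qed.

Lemma within3_of x z1 z2 y : e x z1 -> e z1 z2 -> e z2 y -> within e 3 x y.
Proof.
move=> h1 h2 h3; apply/orP; right; apply/existsP; exists z1; rewrite h1.
exact: within2_of h2 h3.
Qed.

Lemma nbr x y : x != y -> exists z, e x z.
Proof.
move=> hxy; have [[|n] /=] := hconn x y; first by rewrite (negbTE hxy).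
by rewrite (negbTE hxy) /= => /existsP [z /andP[h _]]; exists z.
Qed.

Lemma dist_bound x y : dist e x y <= #|T|.
Proof.
rewrite /dist; apply: (big_ind (fun m => m <= #|T|)) => //.
  by move=> a b ha hb; rewrite geq_min ha.
by move=> i _; apply: ltnW.
Qed.

Lemma not_within n x y : n < dist e x y -> ~~ within e n x y.
Proof.
move=> hn; apply/negP => hw.
have hnT : n < #|T| by apply: leq_trans hn (dist_bound x y).
by have := dist_le hnT hw; rewrite leqNgt hn.
Qed.

Lemma diam_far k : k < diam e -> exists a d, k < dist e a d.
Proof.
move=> hd; case: (boolP [exists a, exists d, k < dist e a d]).
  by case/existsP => a /existsP [d h]; exists a, d.
move=> hn; exfalso.
have : diam e <= k.
  apply/bigmax_leqP => a _; apply/bigmax_leqP => d _; rewrite leqNgt; apply/negP => h.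
  by move/negP: hn; apply; apply/existsP; exists a; apply/existsP; exists d.
by rewrite leqNgt hd.
Qed.

Lemma struct3 a d : 2 < dist e a d -> exists c,
  [/\ a != d, ~~ e a d, ~~ e d a, a != c & [/\ c != d, ~~ e a c, ~~ e c a & e d c]].
Proof.
move=> hf.
have w0 := not_within _ _ _ (ltnW (ltnW hf)); have w1 := not_within _ _ _ (ltnW hf);
have w2 := not_within _ _ _ hf.
have had : a != d by apply: contra w0 => /=.
have hnad : ~~ e a d by apply: contra w1 => h; rewrite within1P h orbT.
have hda : d != a by rewrite eq_sym.
have [c hdc] := nbr _ _ hda.
exists c; split => //.
- by rewrite hsym.
- by apply/eqP => hac; move: hnad; rewrite hac hsym hdc.
- split.
  + by apply/eqP => hcd; move: hdc; rewrite hcd hirr.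
  + by apply: contra w2 => h; apply: within2_of h _; rewrite hsym.
  + by rewrite hsym; apply: contra w2 => h; apply: within2_of h _; rewrite hsym.
  + done.
Qed.

Lemma struct4 a d : 3 < dist e a d -> exists b c,
  [/\ [/\ a != d, ~~ e a d, ~~ e d a, a != c & [/\ c != d, ~~ e a c, ~~ e c a & e d c]],
      a != b, b != c, b != d & [/\ ~~ e b c, ~~ e c b, ~~ e b d & ~~ e d b]].
Proof.
move=> hf.
have [c [had hnad hnda hac [hcd hnac hnca hdc]]] := struct3 _ _ (ltnW hf).
have w2 := not_within _ _ _ (ltnW hf); have w3 := not_within _ _ _ hf.
have [b hab] := nbr _ _ had.
have hnbd : ~~ e b d by apply: contra w2 => h; apply: within2_of hab h.
have hnbc : ~~ e b c by apply: contra w3 => h; apply: within3_of hab h _; rewrite hsym.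
exists b, c; split => //.
- by apply/eqP => hb; move: hab; rewrite hb hirr.
- by apply/eqP => hb; move: hnac; rewrite -hb hab.
- by apply/eqP => hb; move: hnad; rewrite -hb hab.
- by split => //; rewrite hsym.
Qed.

Lemma diam_complete : 2 < #|T| -> diam e = 1 -> forall u w, u != w -> e u w.
Proof.
move=> hT hd u w huw; apply/negPn/negP => he.
have h2 : 2 <= dist e u w.
  apply: dist_ge; first by apply: ltnW.
  by case=> [|[|n]] // _; rewrite ?within1P /= ?negb_or ?huw ?he.
have := leq_trans (@leq_bigmax _ (fun y => dist e u y) w) (@leq_bigmax _ (fun x => \max_y dist e x y) u).
rewrite -/(diam e) hd; lia.
Qed.
End H.

Lemma O_B (V : finType) (e : rel V) : ~~ maker_wins_Mgame e -> ~~ maker_wins_Bgame e -> O_SR e = Out_B.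
Proof. by rewrite /O_SR => /negbTE -> /negbTE ->. Qed.

Lemma O_NB (V : finType) (e : rel V) : ~~ maker_wins_Bgame e -> O_SR e = Out_N \/ O_SR e = Out_B.
Proof. by rewrite /O_SR => /negbTE ->; case: maker_wins_Mgame; auto. Qed.

Lemma O_MNB (V : finType) (e : rel V) : O_SR e = Out_M \/ O_SR e = Out_N \/ O_SR e = Out_B.
Proof.
rewrite /O_SR; case hB: (maker_wins_Bgame e); first by rewrite (steal hB); left.
by case: maker_wins_Mgame; auto.
Qed.

Ltac neq0 := solve [ done | rewrite eq_sym; done ].
Ltac neq := solve [ neq0 | apply/andP; split; neq0 ].

Theorem mainTheorem12 (T : finType) (e : rel T) :
  simple_graph e -> connected_graph e -> 3 <= #|T| ->
  [/\ diam e = 1 -> O_SR (corona e) = Out_B,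
      diam e = 2 -> O_SR (corona e) = Out_M \/ O_SR (corona e) = Out_N
                    \/ O_SR (corona e) = Out_B,
      diam e = 3 -> O_SR (corona e) = Out_N \/ O_SR (corona e) = Out_B
    & 4 <= diam e -> O_SR (corona e) = Out_B].
Proof.
move=> [hsym hirr] hconn hT.
have hT1 : 1 < #|T| by apply: ltnW.
have FN := forced_nonadj _ e hT1.
split.
- move=> hd; have hc := diam_complete _ _ hT hd.
  have F := forced_complete _ e hT1 hc.
  case/card_gt2P: hT => t1 [t2 [t3 [_ [h12 h23 h31]]]].
  apply: O_B.
    apply: (Mgame_loss None) => x.
    case: (eqVneq x None) => [->|hx1].
      by exists (Some t1), (Some t2), (Some t3); split; [split; try neq | split; apply: F; neq].
    case: (eqVneq x (Some t1)) => [->|hx2].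
      by exists None, (Some t2), (Some t3); split; [split; try neq | split; apply: F; neq].
    case: (eqVneq x (Some t2)) => [->|hx3].
      by exists None, (Some t1), (Some t3); split; [split; try neq | split; apply: F; neq].
    by exists None, (Some t1), (Some t2); split; [split; try neq | split; apply: F; neq].
  by apply: (Bgame_loss None (Some t1) (Some t2)); try neq; apply: F; neq.
- by move=> _; apply: O_MNB.
- move=> hd; apply: O_NB.
  have [a [d hf]] : exists a d, 2 < dist e a d by apply: diam_far; rewrite hd.
  have [c [had hnad hnda hac [hcd hnac hnca hdc]]] := struct3 _ e hsym hirr hconn _ _ hf.
  apply: (Bgame_loss (Some a) (Some c) (Some d)); try neq; by apply: FN.
- move=> hd.
  have [a [d hf]] := diam_far _ e 3 hd.
  have [b [c [[had hnad hnda hac [hcd hnac hnca hdc]] hab hbc hbd [hnbc hncb hnbd hndb]]]] :=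
    struct4 _ e hsym hirr hconn _ _ hf.
  apply: O_B.
    apply: (Mgame_loss None) => x.
    case: (eqVneq x (Some a)) => [->|hx1].
      by exists (Some b), (Some c), (Some d); split; [split; try neq | split; apply: FN; neq].
    case: (eqVneq x (Some c)) => [->|hx2].
      by exists (Some d), (Some a), (Some b); split; [split; try neq | split; apply: FN; neq].
    case: (eqVneq x (Some d)) => [->|hx3].
      by exists (Some c), (Some a), (Some b); split; [split; try neq | split; apply: FN; neq].
    by exists (Some a), (Some c), (Some d); split; [split; try neq | split; apply: FN; neq].
  apply: (Bgame_loss (Some a) (Some c) (Some d)); try neq; by apply: FN.
Qed.
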